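(* Let $T=(V,E)$ be a finite rooted tree, $\Pr$ a probability distribution over a finite set of queries, $u\in V$ and $v\in A(u)$. Let $R,R'\subseteq V$ satisfy (i) $v\in R$ and $v\in R'$; (ii) $T(u)\cap R=T(u)\cap R'$; (iii) $\mathrm{path}(u,v)\cap R=\mathrm{path}(u,v)\cap R'=\emptyset$. Then $B_u(R)=B_u(R')$.
   Context: $T=(V,E)$ is a finite rooted tree. For $u\in V$, $T(u)$ is the set of nodes of the subtree rooted at $u$ (including $u$), $A(u)$ the set of proper ancestors of $u$, and for $v\in A(u)$, $\mathrm{path}(u,v)$ the set of nodes strictly between $u$ and $v$ on the path from $u$ to $v$. Each non-leaf node is associated with a variable from a finite set $X$; $\mathrm{vars}(u)$ is the set of variables associated with the nodes of $T(u)$. Each query $q$ determines $Z_q\subseteq X$. For $R\subseteq V$, $w\in V$, query $q$: $I_q(w,R)=1$ iff $w\in R$, $\mathrm{vars}(w)\subseteq Z_q$, and no $x\in A(w)$ has $x\in R$ and $\mathrm{vars}(x)\subseteq Z_q$; else $I_q(w,R)=0$. $\mathbb{E}[I(w,R)]=\sum_q\Pr(q)I_q(w,R)$. Each node $x$ has a partial cost $c(x)$, and the total cost is $C(w)=\sum_{x\in T(w)}c(x)$. The partial benefit of $R$ at $u$ is $B_u(R)=\sum_{w\in R\cap T(u)}\mathbb{E}[I(w,R)]\,C(w)$. *)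

(* Defs.v *)
From mathcomp Require Import all_boot all_order all_algebra.
Set Implicit Arguments. Unset Strict Implicit. Unset Printing Implicit Defensive.
Import Order.TTheory GRing.Theory Num.Theory.
Local Open Scope ring_scope.

(* A finite rooted tree on the finType V is given by a parent map:
   parent u = Some p  iff p is the parent of u;  parent r = None for the root. *)
Section Tree.
Variable V : finType.
Variable parent : V -> option V.

Definition childrel : rel V := fun c p => parent c == Some p.

Definition subtree (u : V) : {set V} := [set w | connect childrel w u].

Definition ancestors (u : V) : {set V} := [set x | (x != u) && connect childrel u x].

Definition path_between (u v : V) : {set V} :=
  [set w | (w \in ancestors u) && (v \in ancestors w)].

Definition is_rooted_tree : Prop :=
  (forall u p, parent u = Some p -> ~~ connect childrel p u) /\
  (exists r, parent r = None /\ forall u, connect childrel u r).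

Definition nonleaf (u : V) : bool := [exists w, childrel w u].

Section Queries.
Variables (X Q : finType) (lab : V -> X) (Z : Q -> {set X}).
Variable (R : realFieldType) (Pr : Q -> R) (c : V -> R).

Definition vars (u : V) : {set X} := lab @: [set w in subtree u | nonleaf w].

Definition covered (q : Q) (w : V) : bool := vars w \subset Z q.

Definition Iq (q : Q) (w : V) (Rs : {set V}) : bool :=
  [&& w \in Rs, covered q w &
      ~~ [exists x in ancestors w, (x \in Rs) && covered q x]].

Definition EI (w : V) (Rs : {set V}) : R := \sum_(q : Q) Pr q * (Iq q w Rs)%:R.

Definition Ctot (w : V) : R := \sum_(x in subtree w) c x.

Definition Bpart (u : V) (Rs : {set V}) : R :=
  \sum_(w in Rs :&: subtree u) EI w Rs * Ctot w.

End Queries.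
End Tree.

(* Main.v *)
Require Import Defs.
From mathcomp Require Import all_boot all_order all_algebra.
Import Order.TTheory GRing.Theory Num.Theory.
Local Open Scope ring_scope.

Section Aux.
Variable V : finType.
Variable parent : V -> option V.
Local Notation e := (childrel parent).

Lemma chain {a b c} : connect e a b -> connect e a c -> connect e b c || connect e c b.
Proof.
move=> /connectP [p Hp ->]; elim: p a Hp => [|y p IH] a /= Hp Hc.
  by rewrite Hc.
case/andP: Hp => Hay Hp.
case/connectP: Hc => [[|z q] /= Hq Ec].
  by rewrite Ec; apply/orP; right; apply/connectP; exists (y :: p) => //=; rewrite Hay.
case/andP: Hq => Haz Hq.
have Eyz : y = z by move: Hay Haz; rewrite /childrel => /eqP -> /eqP [].
apply: IH => //; apply/connectP; exists q => //; by rewrite Eyz.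
Qed.

Lemma antisym {a b} : is_rooted_tree parent -> connect e a b -> connect e b a -> a = b.
Proof.
move=> [Hac _] /connectP [[|y p] /= Hp Eb] Hba; first by [].
case/andP: Hp => Hay Hp.
have Hyb : connect e y b by apply/connectP; exists p.
have Hya := connect_trans Hyb Hba.
by move: Hay; rewrite /childrel => /eqP /Hac; rewrite Hya.
Qed.

Variables (X Q : finType) (lab : V -> X) (Z : Q -> {set X}).

Lemma key (u v w x : V) (q : Q) (Rs Rs' : {set V}) :
  is_rooted_tree parent ->
  v \in ancestors parent u -> v \in Rs' ->
  subtree parent u :&: Rs = subtree parent u :&: Rs' ->
  path_between parent u v :&: Rs = set0 ->
  w \in subtree parent u -> x \in ancestors parent w -> x \in Rs ->
  covered parent lab Z q x ->
  [exists y in ancestors parent w, (y \in Rs') && covered parent lab Z q y].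
Proof.
move=> Ht Hv HvR' E P Hw Hx HxR Hcx.
rewrite !inE in Hv Hw Hx.
case/andP: Hv => Hvu Huv; case/andP: Hx => Hxw Hwx.
have Hsub : forall y, connect e y u -> y \in Rs -> y \in Rs'.
  move=> y Hy HyR; have := congr1 (fun S : {set V} => y \in S) E; rewrite /= !inE Hy HyR /=.
  by move <-.
case/orP: (chain Hw Hwx) => Hux.
- case: (eqVneq x u) => [Exu|Hxu].
  + apply/existsP; exists x; rewrite !inE Hxw Hwx /= Hcx andbT.
    by apply: Hsub => //; rewrite Exu connect0.
  + case/orP: (chain Huv Hux) => Hvx.
    * apply/existsP; exists v; rewrite !inE HvR' /=.
      rewrite -andbA; apply/and3P; split.
      - apply/negP => /eqP Evw; rewrite Evw in Hvu Huv.
        by rewrite (antisym Ht Hw Huv) eqxx in Hvu.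
      - exact: connect_trans Hw Huv.
      - rewrite /covered in Hcx *; apply: subset_trans Hcx.
        apply: imsetS; apply/subsetP => y; rewrite !inE => /andP [Hy ->].
        by rewrite (connect_trans Hy Hvx).
    * case: (eqVneq x v) => [Exv|Hxv].
      - subst x; apply/existsP; exists v; by rewrite !inE HvR' Hxw Hwx Hcx.
      - have : x \in path_between parent u v :&: Rs.
          by rewrite !inE Hxu Hux HxR eq_sym Hxv Hvx.
        by rewrite P inE.
- apply/existsP; exists x; rewrite !inE Hxw Hwx /= Hcx andbT.
  exact: Hsub.
Qed.

End Aux.

Theorem lemma2 (V X Q : finType) (parent : V -> option V)
  (htree : is_rooted_tree parent) (lab : V -> X) (Z : Q -> {set X})
  (R : realFieldType) (Pr : Q -> R)
  (hPr0 : forall q, 0 <= Pr q) (hPr1 : \sum_(q : Q) Pr q = 1)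
  (c : V -> R) (u v : V) (Rs Rs' : {set V}) :
  v \in ancestors parent u ->
  v \in Rs -> v \in Rs' ->
  subtree parent u :&: Rs = subtree parent u :&: Rs' ->
  path_between parent u v :&: Rs = set0 ->
  path_between parent u v :&: Rs' = set0 ->
  Bpart parent lab Z Pr c u Rs = Bpart parent lab Z Pr c u Rs'.
Proof.
move=> Hv HvR HvR' E P P'.
rewrite /Bpart setIC E setIC.
apply: eq_bigr => w Hw.
congr (_ * _); rewrite /EI; apply: eq_bigr => q _.
congr (_ * _%:R).
rewrite inE in Hw; case/andP: Hw => HwR' Hwu.
have HwR : w \in Rs.
  have := congr1 (fun S : {set V} => w \in S) E; rewrite /= !in_setI Hwu HwR' /=.
  by move ->.
rewrite /Iq HwR HwR'; congr (_ && ~~ _).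
apply/idP/idP => /existsP [x /andP [Hx /andP [HxR Hcx]]].
- exact: (key _ _ _ _ _ _ _ _ _ _ _ _ _ htree Hv HvR' E P Hwu Hx HxR Hcx).
- exact: (key _ _ _ _ _ _ _ _ _ _ _ _ _ htree Hv HvR (esym E) P' Hwu Hx HxR Hcx).
Qed.
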